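(* Let $\rho=(r_n)_{n\in\omega}$ be a sequence of positive integers with $r_0=1$ and $r_n\mid r_{n+1}$ for all $n$. Let $G$ be a torsion-free abelian group with $G_\rho:=\bigcap_{n\in\omega}Gr_n=0$. Then $\mathrm{Ext}(\mathbb{Z}_{(\rho)},G)=0$ if and only if $G$ is complete in the $\rho$-topology.
   Context: $\mathbb{Z}_{(\rho)}=\langle 1/r_n:n\in\omega\rangle\subseteq\mathbb{Q}$ is the subgroup of $\mathbb{Q}$ generated by the $1/r_n$. The $\rho$-topology on $G$ is the group topology with basis of neighbourhoods of $0$ the subgroups $Gr_n$ $(n\in\omega)$; it is Hausdorff iff $G_\rho=0$. $G$ is complete in the $\rho$-topology if every Cauchy sequence in this topology converges in $G$. *)

(* Defs.v *)
From HB Require Import structures.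
From mathcomp Require Import all_boot all_order all_algebra.
From mathcomp Require Import boolp.
Set Implicit Arguments. Unset Strict Implicit. Unset Printing Implicit Defensive.
Import Order.TTheory GRing.Theory Num.Theory.
Local Open Scope ring_scope.

Definition is_hom (A B : zmodType) (f : A -> B) : Prop :=
  forall x y, f (x - y) = f x - f y.

Definition torsion_free (G : zmodType) : Prop :=
  forall (x : G) (n : nat), (0 < n)%N -> x *+ n = 0 -> x = 0.

Definition in_Gr (G : zmodType) (m : nat) (x : G) : Prop :=
  exists y : G, x = y *+ m.

Definition G_rho_zero (G : zmodType) (r : nat -> nat) : Prop :=
  forall x : G, (forall n, in_Gr (r n) x) -> x = 0.

(* Cauchy sequences / convergence in the rho-topology (basis of neighbourhoods
   of 0 : the subgroups G r_n). *)
Definition rho_cauchy (G : zmodType) (r : nat -> nat) (u : nat -> G) : Prop :=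
  forall n, exists N, forall i j, (N <= i)%N -> (N <= j)%N -> in_Gr (r n) (u i - u j).

Definition rho_converges (G : zmodType) (r : nat -> nat) (u : nat -> G) (g : G) : Prop :=
  forall n, exists N, forall i, (N <= i)%N -> in_Gr (r n) (u i - g).

Definition rho_complete (G : zmodType) (r : nat -> nat) : Prop :=
  forall u : nat -> G, rho_cauchy r u -> exists g : G, rho_converges r u g.

(* Z_(rho) = < 1/r_n : n > <= Q : the finite Z-linear combinations of the 1/r_n. *)
Definition Zrho_prop (r : nat -> nat) (x : rat) : Prop :=
  exists s : seq (nat * int), x = \sum_(p <- s) (p.2)%:~R / ((r p.1)%:R : rat).

Definition Zrho_pred (r : nat -> nat) : pred rat := fun x => `[< Zrho_prop r x >].

Lemma Zrho_zmod_closed (r : nat -> nat) : zmod_closed (Zrho_pred r).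
Proof.
split.
  by apply/asboolP; exists [::]; rewrite big_nil.
move=> x y /asboolP [s ->] /asboolP [t ->]; apply/asboolP.
exists (s ++ [seq (p.1, - p.2) | p <- t]).
rewrite big_cat /= big_map; congr (_ + _).
rewrite -sumrN; apply: eq_bigr => p _.
by rewrite mulrNz mulNr.
Qed.

HB.instance Definition _ (r : nat -> nat) :=
  GRing.isZmodClosed.Build rat (Zrho_pred r) (Zrho_zmod_closed r).

Definition Zrho (r : nat -> nat) : Type := {x : rat | x \in Zrho_pred r}.
HB.instance Definition _ r := [isSub for (@sval rat (fun x => x \in Zrho_pred r)) : Zrho r -> rat].
HB.instance Definition _ r := [Choice of Zrho r by <:].
HB.instance Definition _ r := [SubChoice_isSubZmodule of Zrho r by <:].

(* Ext(A, G) = 0 : every extension 0 -> G -> E -> A -> 0 of abelian groups splits. *)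
Definition Ext_zero (A G : zmodType) : Prop :=
  forall (E : zmodType) (i : G -> E) (p : E -> A),
    is_hom i -> is_hom p -> injective i -> (forall a, exists e, p e = a) ->
    (forall e, p e = 0 <-> exists g, e = i g) ->
    exists s : A -> E, is_hom s /\ forall a, p (s a) = a.

(* Main.v *)
From HB Require Import structures.
From mathcomp Require Import all_boot all_order all_algebra boolp ring.
Require Import Defs.
Set Implicit Arguments. Unset Strict Implicit. Unset Printing Implicit Defensive.
Import Order.TTheory GRing.Theory Num.Theory.
Local Open Scope ring_scope.

Definition good (r : nat -> nat) (x : Zrho r) N :=
  forall j, (N <= j)%N -> denq (val x * (r j)%:R) == 1.

Section Rep.
Variable r : nat -> nat.
Hypothesis hpos : forall n, (0 < r n)%N.
Hypothesis hdiv : forall n, (r n %| r n.+1)%N.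

Lemma dvd_le n m : (n <= m)%N -> (r n %| r m)%N.
Proof.
elim: m => [|m IH]; first by rewrite leqn0 => /eqP ->.
rewrite leq_eqVlt => /orP [/eqP -> //| ]; rewrite ltnS => /IH h.
exact: dvdn_trans h (hdiv m).
Qed.

Lemma rn_neq0 n : ((r n)%:R : rat) != 0.
Proof. by rewrite pnatr_eq0 -lt0n. Qed.

Lemma lift_frac n M (a : int) : (n <= M)%N ->
  (a%:~R / (r n)%:R : rat) = (a * (r M %/ r n)%N%:Z)%:~R / (r M)%:R.
Proof.
move=> le; have hM := divnK (dvd_le le).
rewrite -{2}hM natrM intrM.
have h1 := rn_neq0 n.
have h2 : (((r M %/ r n)%N)%:R : rat) != 0.
  rewrite pnatr_eq0 -lt0n divn_gt0 ?hpos //; exact: dvdn_leq (hpos M) (dvd_le le).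
rewrite [_%:~R]/= -[((r M %/ r n)%N%:Z)%:~R]/(((r M %/ r n)%N)%:R).
by field; apply/andP; split.
Qed.

Lemma qq_proof n : (r n)%:R^-1 \in Zrho_pred r.
Proof.
apply/asboolP; exists [:: (n, 1%:Z)]; by rewrite big_cons big_nil addr0 mul1r.
Qed.

Definition qq n : Zrho r := Sub ((r n)%:R^-1) (qq_proof n).
Lemma val_qq n : val (qq n) = (r n)%:R^-1.
Proof. by rewrite SubK. Qed.

Lemma repr_ex (x : Zrho r) : exists n (a : int), val x = a%:~R / (r n)%:R.
Proof.
have /asboolP [s ->] := valP x.
elim: s => [|[m b] s [n [a IH]]]; first by exists 0%N, 0; rewrite big_nil mul0r.
exists (m + n)%N, (b * (r (m + n) %/ r m)%N%:Z + a * (r (m + n) %/ r n)%N%:Z).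
rewrite big_cons IH /= (@lift_frac m (m + n)) ?leq_addr // (@lift_frac n (m + n)) ?leq_addl //.
by rewrite intrD mulrDl.
Qed.

Lemma good_repr (x : Zrho r) n (a : int) : val x = a%:~R / (r n)%:R -> good x n.
Proof.
move=> hx j hj; rewrite hx (@lift_frac n j) // -mulrA mulVf ?rn_neq0 // mulr1.
by rewrite denq_int.
Qed.

Lemma hex (x : Zrho r) : exists N, good x N.
Proof. by have [n [a h]] := repr_ex x; exists n; apply: good_repr h. Qed.
End Rep.
Section Hom.
Variables (A B : zmodType) (f : A -> B) (hf : is_hom f).
Lemma hom0 : f 0 = 0.
Proof. by rewrite -(subrr 0) hf subrr. Qed.
Lemma homN x : f (- x) = - f x.
Proof. by rewrite -sub0r hf hom0 sub0r. Qed.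
Lemma homD x y : f (x + y) = f x + f y.
Proof. by rewrite -{1}[y]opprK hf homN opprK. Qed.
Lemma homMn x m : f (x *+ m) = f x *+ m.
Proof. elim: m => [|m IH]; first by rewrite !mulr0n hom0. by rewrite !mulrS homD IH. Qed.
Lemma homMz x z : f (x *~ z) = f x *~ z.
Proof. case: z => [m|m]; first by rewrite -!pmulrn homMn. by rewrite !NegzE !mulrNz homN -!pmulrn homMn. Qed.
End Hom.

Lemma val_hom r : is_hom (fun x : Zrho r => val x).
Proof. by []. Qed.

Lemma in_GrD (G : zmodType) m (x y : G) : in_Gr m x -> in_Gr m y -> in_Gr m (x + y).
Proof. by move=> [a ->] [b ->]; exists (a + b); rewrite mulrnDl. Qed.
Lemma in_GrN (G : zmodType) m (x : G) : in_Gr m x -> in_Gr m (- x).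
Proof. by move=> [a ->]; exists (- a); rewrite mulNrn. Qed.
Lemma in_GrB (G : zmodType) m (x y : G) : in_Gr m x -> in_Gr m y -> in_Gr m (x - y).
Proof. by move=> hx hy; apply: in_GrD => //; apply: in_GrN. Qed.
Lemma in_Gr0 (G : zmodType) m : in_Gr m (0 : G).
Proof. by exists 0; rewrite mul0rn. Qed.
Definition Tf (r : nat -> nat) (G : zmodType) (g : nat -> G) (x : Zrho r) (N : nat) : G :=
  \sum_(j < N) (if denq (val x * (r j)%:R) == 1 then g j *~ numq (val x * (r j)%:R) else 0).


Section Coc.
Variables (r : nat -> nat) (G : zmodType) (g : nat -> G).
Variable hex : forall x : Zrho r, exists N, good x N.

Lemma good_le (x : Zrho r) N M : good x N -> (N <= M)%N -> good x M.
Proof. by move=> h le j hj; apply: h; apply: leq_trans hj. Qed.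

Lemma Tf_S (x : Zrho r) N : good x N ->
  Tf g x N.+1 = Tf g x N + g N *~ numq (val x * (r N)%:R).
Proof. by move=> h; rewrite /Tf big_ord_recr /= (h N (leqnn _)). Qed.

Lemma good_int (x : Zrho r) j : denq (val x * (r j)%:R) == 1 ->
  val x * (r j)%:R = (numq (val x * (r j)%:R))%:~R.
Proof. by move=> /eqP h; rewrite numqE h mulr1. Qed.

Lemma goodD (x y : Zrho r) N : good x N -> good y N -> good (x + y) N.
Proof.
move=> hx hy j hj; have /good_int ex := hx j hj; have /good_int ey := hy j hj.
by rewrite /= mulrDl ex ey -intrD denq_int.
Qed.

Lemma goodN (x : Zrho r) N : good x N -> good (- x) N.
Proof.
move=> hx j hj; have /good_int ex := hx j hj.
by rewrite /= mulNr ex -intrN denq_int.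
Qed.

Lemma goodMn (x : Zrho r) N m : good x N -> good (x *+ m) N.
Proof.
move=> hx; elim: m => [|m IH]; last by rewrite mulrS; apply: goodD.
by move=> j _; rewrite mulr0n /= mul0r.
Qed.

Lemma grp_id (H : zmodType) (A B C u v : H) : (A + (u + v)) - (B + u) - (C + v) = A - B - C.
Proof. rewrite !opprD !addrA [A + u + v - B - u]addrAC [A + u + v - u]addrAC addrK.
by rewrite [A + v - B - C - v]addrAC [A + v - B - v]addrAC addrK. Qed.

Definition DD (x y : Zrho r) N := Tf g (x + y) N - Tf g x N - Tf g y N.

Lemma DD_const (x y : Zrho r) K d : good x K -> good y K -> DD x y (K + d) = DD x y K.
Proof.
move=> hx hy; elim: d => [|d IH]; first by rewrite addn0.
have hx' := good_le hx (leq_addr d K); have hy' := good_le hy (leq_addr d K).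
have hxy := goodD hx' hy'.
rewrite addnS -IH /DD !Tf_S //.
have ex := good_int (hx' _ (leqnn _)); have ey := good_int (hy' _ (leqnn _)).
rewrite [val (x + y)]/= mulrDl ex ey -intrD !numq_int mulrzDr.
exact: grp_id.
Qed.

Definition lev (x : Zrho r) : nat := proj1_sig (cid (hex x)).
Lemma lev_good x : good x (lev x).
Proof. exact: proj2_sig (cid (hex x)). Qed.

Definition coc (x y : Zrho r) : G := DD x y (lev x + lev y).

Lemma coc_eq (x y : Zrho r) N : good x N -> good y N -> coc x y = DD x y N.
Proof.
move=> hx hy; rewrite /coc.
have hx1 := good_le (@lev_good x) (leq_addr (lev y) (lev x)).
have hy1 := good_le (@lev_good y) (leq_addl (lev x) (lev y)).
rewrite -(DD_const N hx1 hy1) -(DD_const (lev x + lev y) hx hy).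
by rewrite addnC.
Qed.
End Coc.
Lemma id1 (H : zmodType) (a b X P Q : H) : a + b + (X - P - Q) - X = (a - P) + (b - Q).
Proof. rewrite (addrC (a + b)) addrAC [X - P - Q - X]addrAC [X - P - X]addrAC subrr add0r.
by rewrite addrC addrACA. Qed.
Lemma id2 (H : zmodType) (a X Y : H) : - a - (0 - X - Y) - Y = - (a - X).
Proof. by rewrite sub0r !opprD !opprK !addrA addrK. Qed.

Lemma Tf0 (r : nat -> nat) (G : zmodType) (g : nat -> G) N : Tf g (0 : Zrho r) N = 0.
Proof. by rewrite /Tf big1 // => j _; rewrite /= mul0r; case: (_ == _); rewrite // (_ : numq 0 = 0) // mulr0z. Qed.

Lemma good0 (r : nat -> nat) N : good (0 : Zrho r) N.
Proof. by move=> j _; rewrite /= mul0r. Qed.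

Definition Ecar (r : nat -> nat) (G : zmodType) (g : nat -> G)
  (hex : forall x : Zrho r, exists N, good x N) : Type := (G * Zrho r)%type.
HB.instance Definition _ r G g hex := Choice.on (@Ecar r G g hex).

Section Egrp.
Variables (r : nat -> nat) (G : zmodType) (g : nat -> G).
Variable hex : forall x : Zrho r, exists N, good x N.
Local Notation E := (@Ecar r G g hex).
Definition eadd (a b : E) : E := (a.1 + b.1 + coc g hex a.2 b.2, a.2 + b.2).
Definition eopp (a : E) : E := (- a.1 - coc g hex a.2 (- a.2), - a.2).
Definition ezero : E := (0, 0).
Definition phi N (a : E) : G := a.1 - Tf g a.2 N.

Lemma phiD N a b : good a.2 N -> good b.2 N -> phi N (eadd a b) = phi N a + phi N b.
Proof. by move=> hx hy; rewrite /phi /eadd /= (coc_eq g hex hx hy) /DD; apply: id1. Qed.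

Lemma phiN N a : good a.2 N -> phi N (eopp a) = - phi N a.
Proof.
move=> hx; rewrite /phi /eopp /= (coc_eq g hex hx (goodN hx)) /DD (subrr a.2) Tf0.
exact: id2.
Qed.

Lemma phi0 N : phi N ezero = 0.
Proof. by rewrite /phi /= Tf0 subrr. Qed.

Lemma eq_phi N (a b : E) : a.2 = b.2 -> phi N a = phi N b -> a = b.
Proof.
case: a b => [a1 x] [b1 y] /= exy h; rewrite -exy; congr pair.
by move: h; rewrite /phi /= exy => /(congr1 (fun t => t + Tf g y N)); rewrite !subrK.
Qed.

Lemma eaddA : associative eadd.
Proof.
move=> a b c; set N := (lev hex a.2 + lev hex b.2 + lev hex c.2)%N.
have ha : good a.2 N by apply: good_le (@lev_good _ hex a.2) _; rewrite /N -addnA leq_addr.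
have hb : good b.2 N by apply: good_le (@lev_good _ hex b.2) _; rewrite /N addnAC leq_addl.
have hc : good c.2 N by apply: good_le (@lev_good _ hex c.2) _; rewrite /N leq_addl.
apply: (@eq_phi N); first by rewrite /= addrA.
by rewrite !phiD //= ?addrA //; apply: goodD.
Qed.

Lemma eaddC : commutative eadd.
Proof.
move=> a b; set N := (lev hex a.2 + lev hex b.2)%N.
have ha : good a.2 N by apply: good_le (@lev_good _ hex a.2) _; rewrite /N leq_addr.
have hb : good b.2 N by apply: good_le (@lev_good _ hex b.2) _; rewrite /N leq_addl.
apply: (@eq_phi N); first by rewrite /= addrC.
by rewrite !phiD // addrC.
Qed.

Lemma eadd0 : left_id ezero eadd.
Proof.
move=> a; have ha := @lev_good _ hex a.2.
apply: (@eq_phi (lev hex a.2)); first by rewrite /= add0r.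
by rewrite phiD // ?phi0 ?add0r //; apply: good0.
Qed.

Lemma eaddN : left_inverse ezero eopp eadd.
Proof.
move=> a; have ha := @lev_good _ hex a.2.
apply: (@eq_phi (lev hex a.2)); first by rewrite /= addNr.
by rewrite phiD ?phiN ?phi0 ?addNr //; apply: goodN.
Qed.
End Egrp.

HB.instance Definition _ r G g hex :=
  GRing.isZmodule.Build (@Ecar r G g hex) (@eaddA r G g hex) (@eaddC r G g hex)
    (@eadd0 r G g hex) (@eaddN r G g hex).

Fixpoint accum (f : nat -> nat) n := match n with 0%N => f 0%N | m.+1 => (accum f m + f m.+1)%N end.
Lemma accum_ge f n : (f n <= accum f n)%N.
Proof. by case: n => [|n] //=; rewrite leq_addl. Qed.
Lemma accum_mono f n m : (n <= m)%N -> (accum f n <= accum f m)%N.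
Proof.
elim: m => [|m IH]; first by rewrite leqn0 => /eqP ->.
rewrite leq_eqVlt => /orP [/eqP -> //|]; rewrite ltnS => /IH h.
by apply: leq_trans h _; rewrite /= leq_addr.
Qed.

Section Fwd.
Variables (r : nat -> nat) (G : zmodType).
Hypothesis hr0 : r 0%N = 1%N.
Hypothesis hpos : forall n, (0 < r n)%N.
Hypothesis hdiv : forall n, (r n %| r n.+1)%N.
Let hx := hex hpos hdiv.
Variable g : nat -> G.
Local Notation E := (@Ecar r G g hx).

Lemma coc0l (y : Zrho r) : coc g hx 0 y = 0.
Proof.
rewrite (coc_eq g hx (@good0 r (lev hx y)) (@lev_good _ hx y)) /DD add0r Tf0.
by rewrite subr0 subrr.
Qed.

Lemma EaddE (a b : E) : a + b = eadd a b. Proof. by []. Qed.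
Lemma EoppE (a : E) : - a = eopp a. Proof. by []. Qed.
Lemma E0E : (0 : E) = ezero g hx. Proof. by []. Qed.

Lemma EMn (e : E) N m : good e.2 N ->
  e *+ m = (e.1 *+ m - Tf g e.2 N *+ m + Tf g (e.2 *+ m) N, e.2 *+ m).
Proof.
move=> he; elim: m => [|m IH].
  by rewrite !mulr0n E0E /ezero Tf0 subrr add0r.
rewrite mulrS IH EaddE /eadd /= (coc_eq g hx he (goodMn m he)) /DD -!mulrS.
congr pair; rewrite !mulrS.
set a := e.1; set b := e.1 *+ m; set c := Tf g e.2 N *+ m; set d := Tf g (e.2 *+ m) N.
set t := Tf g _ N; set f := Tf g e.2 N.
rewrite !opprD !addrA.
by rewrite addrAC [_ + t - d]addrAC addrK addrAC [a + b - c - f]addrAC.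
Qed.

Lemma Tf_q0 N : Tf g (qq r 0) N = \sum_(j < N) g j *+ r j.
Proof.
apply: eq_bigr => j _; rewrite val_qq hr0 invr1 mul1r.
have -> : ((r j)%:R : rat) = ((r j)%:Z)%:~R by [].
by rewrite denq_int eqxx numq_int pmulrn.
Qed.

Lemma good_qq n : good (qq r n) n.
Proof. by apply: (@good_repr _ hpos hdiv _ n 1); rewrite val_qq mul1r. Qed.

Lemma qq_mul n : qq r 0 = qq r n *+ r n.
Proof.
apply: val_inj; rewrite (homMn (@val_hom r)) !val_qq hr0 invr1.
by rewrite -[RHS]mulr_natr mulVf // rn_neq0.
Qed.
End Fwd.

Theorem fwd (r : nat -> nat) (G : zmodType) :
  r 0%N = 1%N -> (forall n, (0 < r n)%N) -> (forall n, (r n %| r n.+1)%N) ->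
  Ext_zero (Zrho r) G -> rho_complete G r.
Proof.
move=> hr0 hpos hdiv hE u hu.
pose Nf n := proj1_sig (cid (hu n)).
have hN n : forall i j, (Nf n <= i)%N -> (Nf n <= j)%N -> in_Gr (r n) (u i - u j).
  exact: proj2_sig (cid (hu n)).
pose v n := u (accum Nf n).
have hv n : in_Gr (r n) (v n.+1 - v n).
  apply: hN; last exact: accum_ge.
  by apply: leq_trans (accum_ge _ _) _; apply: accum_mono.
pose gg n := proj1_sig (cid (hv n)).
have hg n : v n.+1 - v n = gg n *+ r n by exact: proj2_sig (cid (hv n)).
have tele N : \sum_(j < N) gg j *+ r j = v N - v 0%N.
  elim: N => [|N IH]; first by rewrite big_ord0 subrr.
  by rewrite big_ord_recr /= IH -hg addrC addrA subrK.
pose hx := hex hpos hdiv.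
have [] := hE (@Ecar r G gg hx) (fun x => (x, 0)) snd.
- move=> x y; rewrite EoppE EaddE /eadd /eopp /=.
  by rewrite !coc0l oppr0 subr0 !addr0.
- by [].
- by move=> x y [].
- by move=> a; exists (0, a).
- move=> [e1 e2] /=; split => [-> | [h [_ ->]]]; first by exists e1.
  by [].
move=> s [hs hps].
exists ((s (qq r 0)).1 + v 0%N) => n; exists (accum Nf n) => i hi.
have key : in_Gr (r n) ((s (qq r 0)).1 + v 0%N - v n).
  have e1 : qq r 0 = qq r n *+ r n by apply: qq_mul.
  have h1 := homMn hs (qq r n) (r n).
  have hgd : good (s (qq r n)).2 n by rewrite hps; apply: good_qq.
  rewrite (EMn (r n) hgd) -e1 in h1.
  move: h1; rewrite hps -e1 (Tf_q0 hr0) tele => /(congr1 fst) /= ->.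
  exists ((s (qq r n)).1 - Tf gg (qq r n) n); rewrite mulrnBl.
  by rewrite -[_ + (v n - _) + _]addrA subrK addrK.
have -> : u i - ((s (qq r 0)).1 + v 0%N) = (u i - v n) - ((s (qq r 0)).1 + v 0%N - v n).
  by rewrite opprB addrA subrK.
apply: in_GrB => //; apply: hN => //; first by apply: leq_trans (accum_ge _ _) hi.
exact: accum_ge.
Qed.

Theorem bwd (r : nat -> nat) (G : zmodType) :
  (forall n, (0 < r n)%N) -> (forall n, (r n %| r n.+1)%N) ->
  torsion_free G -> rho_complete G r -> Ext_zero (Zrho r) G.
Proof.
move=> hpos hdiv htf hc E i p hi hp hinj hsurj hker.
pose e n := sval (cid (hsurj (qq r n))).
have he n : p (e n) = qq r n by exact: svalP (cid (hsurj (qq r n))).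
pose k n := (r n.+1 %/ r n)%N.
have hkr n : (k n * r n)%N = r n.+1 by rewrite divnK.
have hk0 n : p (e n.+1 *+ k n - e n) = 0.
  rewrite hp (homMn hp) !he; apply: val_inj.
  rewrite (val_hom (qq r n.+1 *+ k n)) (homMn (@val_hom r)) !val_qq /=.
  rewrite -mulr_natr -hkr natrM.
  have h1 := rn_neq0 hpos n.
  have h2 : ((k n)%:R : rat) != 0.
    rewrite pnatr_eq0; apply/eqP => hk; have := hkr n; rewrite hk mul0n => hh.
    by move: (hpos n.+1); rewrite -hh.
  by field; apply/andP.
pose gg n := sval (cid ((hker _).1 (hk0 n))).
have hgg n : e n.+1 *+ k n - e n = i (gg n) by exact: svalP (cid ((hker _).1 (hk0 n))).
pose ss N := \sum_(j < N) gg j *+ r j.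
have ssS N : ss N.+1 = ss N + gg N *+ r N by rewrite /ss big_ord_recr.
have tail n j : (n <= j)%N -> in_Gr (r n) (ss j - ss n).
  elim: j => [|j IH]; first by rewrite leqn0 => /eqP ->; rewrite subrr; apply: in_Gr0.
  rewrite leq_eqVlt => /orP [/eqP -> | ]; first by rewrite subrr; apply: in_Gr0.
  rewrite ltnS => hj; rewrite ssS addrAC; apply: in_GrD; first exact: IH.
  exists (gg j *+ (r j %/ r n)); rewrite -mulrnA divnK //; exact: dvd_le.
have [H0 hH0] : exists H0, rho_converges r ss H0.
  apply: hc => n; exists n => a b ha hb.
  have -> : ss a - ss b = (ss a - ss n) - (ss b - ss n) by rewrite opprB addrA subrK.
  by apply: in_GrB; apply: tail.
have hH n : in_Gr (r n) (H0 - ss n).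
  have [N hN] := hH0 n.
  have -> : H0 - ss n = (ss (N + n) - ss n) - (ss (N + n) - H0) by rewrite opprB [RHS]addrC addrA subrK.
  by apply: in_GrB; [apply: tail; rewrite leq_addl | apply: hN; rewrite leq_addr].
pose h n := sval (cid (hH n)).
have hh n : H0 - ss n = h n *+ r n by exact: svalP (cid (hH n)).
pose e' n := e n + i (h n).
have rel n : e' n.+1 *+ k n = e' n.
  have hg' : gg n + h n.+1 *+ k n = h n.
    apply/eqP; rewrite -subr_eq0; apply/eqP; apply: (htf _ (r n) (hpos n)).
    rewrite mulrnBl mulrnDl -mulrnA hkr -!hh ssS.
    by apply/eqP; rewrite subr_eq0 (addrC (ss n)) opprD addrA addrC addrACA addNr add0r addrC.
  rewrite /e' mulrnDl -(homMn hi) -[e n.+1 *+ k n](subrK (e n)) hgg.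
  by rewrite -addrA (addrC (i _)) -addrA -(homD hi) (addrC (h n.+1 *+ k n)) hg'.
have lift n m : (n <= m)%N -> e' n = e' m *+ (r m %/ r n).
  elim: m => [|m IH]; first by rewrite leqn0 => /eqP ->; rewrite divnn hpos.
  rewrite leq_eqVlt => /orP [/eqP -> | ]; first by rewrite divnn hpos.
  rewrite ltnS => hm; rewrite IH // -(rel m) -mulrnA.
  by rewrite muln_divA ?dvd_le // hkr.
have wd n m (a b : int) (x : Zrho r) : val x = a%:~R / (r n)%:R -> val x = b%:~R / (r m)%:R ->
    e' n *~ a = e' m *~ b.
  move=> hxa hxb.
  rewrite (lift n (n + m)%N) ?leq_addr // (lift m (n + m)%N) ?leq_addl //.
  rewrite !pmulrn -!mulrzA.
  move: hxb; rewrite hxa (lift_frac hpos hdiv a (leq_addr m n)) (lift_frac hpos hdiv b (leq_addl n m)).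
  move/(mulIf (invr_neq0 (rn_neq0 hpos (n + m)))) /intr_inj => hab.
  by rewrite [(_ * a)%R]mulrC hab [(b * _)%R]mulrC.
pose pn x := sval (cid (repr_ex hpos hdiv x)).
have hpn x : exists a : int, val x = a%:~R / (r (pn x))%:R by exact: svalP (cid (repr_ex hpos hdiv x)).
pose pa x := sval (cid (hpn x)).
have hpa x : val x = (pa x)%:~R / (r (pn x))%:R by exact: svalP (cid (hpn x)).
pose sec x := e' (pn x) *~ pa x.
have sec_ok x n a : val x = a%:~R / (r n)%:R -> sec x = e' n *~ a.
  by move=> hx; apply: wd (hpa x) hx.
exists sec; split.
  move=> x y; set M := (pn x + pn y)%N.
  have hx := hpa x; have hy := hpa y.
  rewrite (lift_frac hpos hdiv _ (leq_addr (pn y) (pn x))) -/M in hx.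
  rewrite (lift_frac hpos hdiv _ (leq_addl (pn x) (pn y))) -/M in hy.
  rewrite (sec_ok x _ _ hx) (sec_ok y _ _ hy) -mulrzBr; apply: sec_ok.
  by rewrite (val_hom x y) hx hy intrB mulrBl.
move=> x; rewrite /sec (homMz hp) (homD hp).
have -> : p (i (h (pn x))) = 0 by apply/(hker _).2; exists (h (pn x)).
rewrite he addr0; apply: val_inj.
by rewrite (homMz (@val_hom r)) val_qq hpa -mulrzr mulrC.
Qed.

Theorem corollary4p1 (r : nat -> nat) (G : zmodType) :
  r 0%N = 1%N ->
  (forall n, (0 < r n)%N) ->
  (forall n, (r n %| r n.+1)%N) ->
  torsion_free G ->
  G_rho_zero G r ->
  (Ext_zero (Zrho r) G <-> rho_complete G r).
Proof.
move=> hr0 hpos hdiv htf _; split; first exact: fwd.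
exact: bwd.
Qed.
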